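(* Let $f(t)\neq 0$ be a Castelnuovo polynomial with $d=\deg f(t)>0$, and let $f^{\ast}(t)=f(t)-t^{d-1}-t^{d}$. If $f^{\ast}(t)$ is not a Castelnuovo polynomial, then \[f(t)=1+2t+3t^2+\dots+(u+1)t^u\] for some integer $u>0$.
   Context: $\mathbb{N}=\{0,1,2,\dots\}$. A function $s:\mathbb{Z}\to\mathbb{C}$ is identified with its generating function $\sum_n s(n)t^n$. A Castelnuovo function is a finitely supported function $s:\mathbb{N}\to\mathbb{N}$ such that for some integer $\sigma\ge 0$, $s(0)=1,s(1)=2,\dots,s(\sigma-1)=\sigma$ and $s(\sigma-1)\ge s(\sigma)\ge s(\sigma+1)\ge\dots\ge 0$ (with the convention $s(-1)=0$ when $\sigma=0$); a Castelnuovo polynomial is the generating function $\sum_n s(n)t^n$ of a Castelnuovo function. *)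

(* Defs.v *)
From HB Require Import structures.
From mathcomp Require Import all_boot all_order all_algebra.
Set Implicit Arguments. Unset Strict Implicit. Unset Printing Implicit Defensive.
Import Order.TTheory GRing.Theory Num.Theory.
Local Open Scope ring_scope.

(* A Castelnuovo function s : N -> N, encoded with values in int (so that the
   nonnegativity requirement "s : N -> N" is an explicit condition).
   Finite support is automatic for coefficient functions of polynomials. *)
Definition castelnuovo_fun (s : nat -> int) : Prop :=
  (forall n, 0 <= s n) /\
  exists sigma : nat,
    (forall i : nat, (i < sigma)%N -> s i = (i.+1)%:Z) /\
    (forall i : nat, (sigma <= i)%N ->
        s i <= (if i is j.+1 then s j else 0)).

Definition castelnuovo_poly (p : {poly int}) : Prop :=
  castelnuovo_fun (fun n => p`_n).

(* Main.v *)
Require Import Defs.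
From HB Require Import structures.
From mathcomp Require Import all_boot all_order all_algebra.
From mathcomp Require Import zify.
Import Order.TTheory GRing.Theory Num.Theory.
Local Open Scope ring_scope.

Theorem lemma3 (f : {poly int}) :
  f != 0 -> castelnuovo_poly f ->
  (0 < (size f).-1)%N ->
  ~ castelnuovo_poly (f - 'X^((size f).-1 - 1) - 'X^((size f).-1)) ->
  exists u : nat, (0 < u)%N /\
    f = \sum_(i < u.+1) (i.+1)%:R *: 'X^i.
Proof.
move=> fn0 [Hnn0 [sigma [Hlow0 Hmon0]]] dpos Hnot.
have [s Es] : exists s : nat -> int, forall n, f`_n = s n by exists (fun n => f`_n).
have Hnn : forall n, 0 <= s n by move=> n; rewrite -Es.
have Hlow : forall i, (i < sigma)%N -> s i = i.+1 by move=> i H; rewrite -Es; exact: Hlow0.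
have Hm : forall k, (sigma <= k.+1)%N -> s k.+1 <= s k
  by move=> k H; rewrite -!Es; exact: Hmon0 k.+1 H.
have Hmz : (sigma <= 0)%N -> s 0%N <= 0 by move=> H; rewrite -Es; exact: Hmon0 0%N H.
clear Hnn0 Hlow0 Hmon0.
set d := (size f).-1 in dpos Hnot *.
have Hz : forall n, (d < n)%N -> s n = 0.
  move=> n; rewrite /d -Es => Hn; apply: nth_default; move: Hn; case: (size f) => //= k; lia.
have Hd : 0 < s d.
  have : s d != 0 by rewrite -Es; rewrite -lead_coefE lead_coef_eq0.
  have := Hnn d; lia.
clearbody d.
case: d dpos Hz Hd Hnot => [//|e] _ Hz Hd Hnot.
rewrite subSS subn0 in Hnot.
have Hsig : (sigma <= e.+2)%N.
  case: (leqP sigma e.+2) => // H.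
  have := Hlow e.+2 H; rewrite Hz //.
have gE : forall n : nat, (f - 'X^e - 'X^(e.+1))`_n =
   s n - (if n == e then 1 else 0) - (if n == e.+1 then 1 else 0).
  move=> n; rewrite !coefB !coefXn Es; do 2 case: eqP => //.
case: (leqP e.+2 sigma) => Hs.
  exists e.+1; split => //.
  have Esig : sigma = e.+2 by apply/eqP; rewrite eqn_leq Hs Hsig.
  subst sigma.
  rewrite -(poly_def e.+2 (fun i : nat => (i.+1)%:R)); apply/polyP => i; rewrite coef_poly.
  case: ltnP => Hi.
    by rewrite Es Hlow ?pmulrn //; lia.
  by rewrite Es; apply: Hz; lia.
exfalso; apply: Hnot; split.
  move=> n; rewrite gE.
  have := Hnn n.
  case: (leqP sigma e) => Hc.
    have := Hm e ltac:(lia).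
    intros; repeat (case: eqP => //= ?); subst; lia.
  have := Hlow e Hc.
  intros; repeat (case: eqP => //= ?); subst; lia.
exists (minn sigma e); split.
  move=> i Hi; rewrite gE; have := Hlow i ltac:(lia).
  intros; repeat (case: eqP => //= ?); subst; lia.
move=> [|j] Hj.
  rewrite gE.
  have := Hnn 0%N.
  case: (posnP sigma) => Hs0.
    have := Hmz ltac:(lia).
    intros; repeat (case: eqP => //= ?); lia.
  have := Hlow 0%N Hs0.
  intros; repeat (case: eqP => //= ?); lia.
rewrite !gE.
case: (ltngtP j.+1 e.+2) => Hjd.
- case: (ltngtP j.+1 e.+1) => Hjd2; last first.
  + have := Hm j ltac:(lia).
    intros; repeat (case: eqP => //= ?); lia.
  + lia.
  + case: (ltngtP j.+1 e) => Hjd3.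
    * have := Hm j ltac:(lia).
      intros; repeat (case: eqP => //= ?); lia.
    * lia.
    * case: (leqP sigma j.+1) => Hc.
        have := Hm j Hc.
        intros; repeat (case: eqP => //= ?); lia.
      have := Hlow j.+1 Hc; have := Hlow j ltac:(lia).
      intros; repeat (case: eqP => //= ?); lia.
- rewrite !Hz //; try lia.
  intros; repeat (case: eqP => //= ?); lia.
- have : j = e.+1 by lia.
  move=> ?; subst j.
  rewrite (Hz e.+2) //.
  intros; repeat (case: eqP => //= ?); lia.
Qed.
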